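(* Let $(R,\mathfrak m)$ be a Noetherian local ring of dimension $d\ge1$, let $J$ be an $\mathfrak m$-primary ideal, and let $I=(J,h_1,\dots,h_m)$ with $h_1,\dots,h_m\in R$ integral over $J$, and let $s=\operatorname{red}_J(I)$. Then \[ f_0(I)\le\left(1+\lambda\big(R/(J:I)\big)\cdot\left[\binom{m+s}{s}-1\right]\right)\cdot f_0(J). \]
   Context: $\lambda$ denotes length, $\nu$ minimal number of generators. For an $\mathfrak m$-primary ideal $K$, $f_0(K)$ is the multiplicity of the special fiber ring $\bigoplus_{n\ge0}K^n/\mathfrak mK^n$, i.e. $\nu(K^n)=\lambda(K^n/\mathfrak mK^n)=f_0(K)\binom{n+d-1}{d-1}+(\text{lower order terms})$ for $n\gg0$. Since $I$ is integral over $J$, $J$ is a reduction of $I$, and $\operatorname{red}_J(I)$ is the least $s\ge0$ with $I^{s+1}=JI^s$. $J:I=\{r\in R: rI\subseteq J\}$. *)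

(* Defs.v *)
From HB Require Import structures.
From mathcomp Require Import all_boot all_order all_algebra.
Set Implicit Arguments. Unset Strict Implicit. Unset Printing Implicit Defensive.
Import Order.TTheory GRing.Theory Num.Theory.
Local Open Scope ring_scope.

Section CommAlg.
Variable R : comNzRingType.

Definition subsetI (A B : R -> Prop) : Prop := forall x, A x -> B x.
Definition eqI (A B : R -> Prop) : Prop := forall x, A x <-> B x.
Definition ssubsetI (A B : R -> Prop) : Prop :=
  subsetI A B /\ exists x, B x /\ ~ A x.

Definition is_ideal (I : R -> Prop) : Prop :=
  [/\ I 0, (forall x y, I x -> I y -> I (x + y)) & (forall r x, I x -> I (r * x))].

Definition gen (S : R -> Prop) : R -> Prop :=
  fun x => forall I, is_ideal I -> subsetI S I -> I x.

Definition unitI : R -> Prop := fun _ => True.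

Definition mulI (A B : R -> Prop) : R -> Prop :=
  gen (fun z => exists a b, [/\ A a, B b & z = a * b]).

Fixpoint powI (A : R -> Prop) (n : nat) : R -> Prop :=
  match n with 0 => unitI | n'.+1 => mulI A (powI A n') end.

Definition colonI (J I : R -> Prop) : R -> Prop :=
  fun r => forall x, I x -> J (r * x).

Definition radI (J : R -> Prop) : R -> Prop := fun x => exists n, J (x ^+ n).

Definition proper_ideal (I : R -> Prop) := is_ideal I /\ ~ I 1.

Definition is_prime (P : R -> Prop) :=
  proper_ideal P /\ forall x y, P (x * y) -> P x \/ P y.

Definition is_primary (Q : R -> Prop) :=
  proper_ideal Q /\ forall x y, Q (x * y) -> ~ Q x -> radI Q y.

Definition noetherian : Prop :=
  forall I, is_ideal I -> exists s : seq R, eqI I (gen (fun x => x \in s)).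

Definition local_with (m : R -> Prop) : Prop :=
  proper_ideal m /\ forall I, proper_ideal I -> subsetI I m.

Definition prime_chain (P : nat -> R -> Prop) (n : nat) : Prop :=
  (forall i, (i <= n)%N -> is_prime (P i)) /\
  (forall i, (i < n)%N -> ssubsetI (P i) (P i.+1)).

Definition krull_dim (d : nat) : Prop :=
  (exists P, prime_chain P d) /\ forall P k, prime_chain P k -> (k <= d)%N.

Definition m_primary (m J : R -> Prop) : Prop := is_primary J /\ eqI (radI J) m.

Definition integral_over (J : R -> Prop) (h : R) : Prop :=
  exists (n : nat) (a : nat -> R), (0 < n)%N /\
    (forall i, (1 <= i <= n)%N -> powI J i (a i)) /\
    h ^+ n + \sum_(1 <= i < n.+1) a i * h ^+ (n - i) = 0.

Definition is_red_number (J I : R -> Prop) (s : nat) : Prop :=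
  eqI (powI I s.+1) (mulI J (powI I s)) /\
  forall t, (t < s)%N -> ~ eqI (powI I t.+1) (mulI J (powI I t)).

Definition ideal_chain (A B : R -> Prop) (c : nat -> R -> Prop) (n : nat) : Prop :=
  [/\ eqI (c 0%N) A, eqI (c n) B,
      (forall i, (i <= n)%N -> is_ideal (c i)) &
      (forall i, (i < n)%N -> ssubsetI (c i) (c i.+1))].

(* length of the R-module B/A (for ideals A <= B) equals n:
   submodules of B/A correspond to ideals between A and B *)
Definition length_eq (A B : R -> Prop) (n : nat) : Prop :=
  (exists c, ideal_chain A B c n) /\ forall c k, ideal_chain A B c k -> (k <= n)%N.

Definition nu_pow (m K : R -> Prop) (n v : nat) : Prop :=
  length_eq (mulI m (powI K n)) (powI K n) v.

Definition is_f0 (m K : R -> Prop) (d f : nat) : Prop :=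
  exists (p : {poly rat}) (N : nat), (size p <= d.-1)%N /\
    forall n v, (N <= n)%N -> nu_pow m K n v ->
      (v%:R : rat) = (f * 'C(n + d.-1, d.-1))%:R + p.[n%:R].

End CommAlg.

(* Main.v *)
Require Import Defs.
From HB Require Import structures.
From mathcomp Require Import all_boot all_order all_algebra.
From mathcomp Require Import ring lra zify.
From Stdlib Require Import Classical.
Import Defs.
Set Implicit Arguments. Unset Strict Implicit. Unset Printing Implicit Defensive.
Import Order.TTheory GRing.Theory Num.Theory.
Local Open Scope ring_scope.


Section Alg.
Variable R : comNzRingType.
Implicit Types (A B T K : R -> Prop).

Lemma gen_ideal (S : R -> Prop) : is_ideal (gen S).
Proof.
split.
- by move=> I [] .
- by move=> x y Hx Hy I HI HS; case: (HI) => _ Ha _; apply: Ha; [apply: Hx|apply: Hy].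
- by move=> r x Hx I HI HS; case: (HI) => _ _ Hm; apply: Hm; apply: Hx.
Qed.

Lemma gen_sub (S : R -> Prop) x : S x -> gen S x.
Proof. by move=> Sx I _; apply. Qed.

Lemma gen_min (S : R -> Prop) T : is_ideal T -> subsetI S T -> subsetI (gen S) T.
Proof. by move=> HT HS x Hx; apply: Hx. Qed.

Lemma ideal0 T : is_ideal T -> T 0. Proof. by case. Qed.
Lemma idealD T x y : is_ideal T -> T x -> T y -> T (x + y). Proof. by case=> _ H _; apply: H. Qed.
Lemma idealMl T r x : is_ideal T -> T x -> T (r * x). Proof. by case=> _ _ H; apply: H. Qed.
Lemma idealMr T r x : is_ideal T -> T x -> T (x * r). Proof. by move=> H Hx; rewrite mulrC; apply: idealMl. Qed.
Lemma idealN T x : is_ideal T -> T x -> T (- x).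
Proof. by move=> H Hx; rewrite -mulN1r; apply: idealMl. Qed.
Lemma idealB T x y : is_ideal T -> T x -> T y -> T (x - y).
Proof. by move=> H Hx Hy; apply: idealD => //; apply: idealN. Qed.

Lemma unit_ideal : is_ideal (@unitI R). Proof. by []. Qed.

Lemma mulI_ideal A B : is_ideal (mulI A B). Proof. exact: gen_ideal. Qed.
Lemma mulI_prod A B a b : A a -> B b -> mulI A B (a * b).
Proof. by move=> Ha Hb; apply: gen_sub; exists a, b. Qed.
Lemma mulI_min A B T : is_ideal T -> (forall a b, A a -> B b -> T (a * b)) ->
  subsetI (mulI A B) T.
Proof. by move=> HT H; apply: gen_min => // z [a [b [Ha Hb ->]]]; apply: H. Qed.

Lemma colon_ideal T C : is_ideal T -> is_ideal (colonI T C).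
Proof.
move=> HT; split.
- by move=> x _; rewrite mul0r; apply: ideal0.
- by move=> x y Hx Hy z Hz; rewrite mulrDl; apply: idealD => //; [apply: Hx|apply: Hy].
- by move=> r x Hx z Hz; rewrite -mulrA; apply: idealMl => //; apply: Hx.
Qed.

Lemma pre_ideal T u : is_ideal T -> is_ideal (fun x => T (u * x)).
Proof.
move=> HT; split.
- by rewrite mulr0; apply: ideal0.
- by move=> x y Hx Hy; rewrite mulrDr; apply: idealD.
- by move=> r x Hx; rewrite mulrCA; apply: idealMl.
Qed.

Lemma mulI_sub A B : is_ideal B -> subsetI (mulI A B) B.
Proof. by move=> HB; apply: mulI_min => // a b _ Hb; apply: idealMl. Qed.

Lemma mulI_mono A A' B B' : subsetI A A' -> subsetI B B' -> subsetI (mulI A B) (mulI A' B').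
Proof. by move=> HA HB; apply: mulI_min; [apply: mulI_ideal|move=> a b Ha Hb; apply: mulI_prod; auto]. Qed.

Lemma powI_ideal A n : is_ideal (powI A n).
Proof. by case: n => [|n] //=; apply: mulI_ideal. Qed.

Lemma powI_mono A A' n : subsetI A A' -> subsetI (powI A n) (powI A' n).
Proof. by move=> H; elim: n => [|n IH] //=; apply: mulI_mono. Qed.

Lemma powI_mul A a b x y : powI A a x -> powI A b y -> powI A (a + b) (x * y).
Proof.
elim: a x y => [|a IH] x y /=.
- by move=> _ Hy; rewrite add0n mulrC; apply: idealMr => //; apply: powI_ideal.
- move=> Hx Hy; change (mulI A (powI A (a + b)) (x * y)).
  suff: colonI (mulI A (powI A (a + b))) (powI A b) x by apply.
  move: x Hx; apply: mulI_min; first by apply: colon_ideal; apply: mulI_ideal.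
  move=> i z Hi Hz w Hw; rewrite -mulrA; apply: mulI_prod => //; exact: IH.
Qed.

Lemma powI_exp A x i : is_ideal A -> A x -> powI A i (x ^+ i).
Proof.
move=> HA Hx; elim: i => [|i IH] //=; rewrite exprS; exact: mulI_prod.
Qed.

Fixpoint addL A (s : seq R) : R -> Prop :=
  match s with [::] => A | x :: s' => fun y => exists r z, addL A s' z /\ y = r * x + z end.

Lemma addL_ideal A s : is_ideal A -> is_ideal (addL A s).
Proof.
move=> HA; elim: s => [|x s IH] //=; split.
- by exists 0, 0; split; [apply: ideal0|rewrite mul0r add0r].
- move=> y1 y2 [r1 [z1 [H1 ->]]] [r2 [z2 [H2 ->]]]; exists (r1 + r2), (z1 + z2); split.
  + exact: idealD.
  + by rewrite mulrDl; ring.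
- move=> r y [r1 [z1 [H1 ->]]]; exists (r * r1), (r * z1); split; first exact: idealMl.
  by ring.
Qed.

Lemma addL_base A s x : is_ideal A -> A x -> addL A s x.
Proof.
move=> HA; elim: s x => [|y s IH] x //= Hx; exists 0, x; split; [exact: IH|by rewrite mul0r add0r].
Qed.

Lemma addL_mem A s x : is_ideal A -> x \in s -> addL A s x.
Proof.
move=> HA; elim: s => [|y s IH] //=; rewrite inE => /orP [/eqP ->|Hx].
- exists 1, 0; split; [apply: ideal0; exact: addL_ideal|by rewrite mul1r addr0].
- exists 0, x; split; [exact: IH|by rewrite mul0r add0r].
Qed.

Lemma addL_min A s T : is_ideal T -> subsetI A T -> (forall x, x \in s -> T x) ->
  subsetI (addL A s) T.
Proof.
move=> HT HA; elim: s => [|y s IH] //= Hs z [r [w [Hw ->]]].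
apply: idealD => //; [apply: idealMl => //; apply: Hs; exact: mem_head|].
by apply: IH => // x Hx; apply: Hs; rewrite inE Hx orbT.
Qed.

End Alg.


Section Len.
Variable R : comNzRingType.
Variable mm : R -> Prop.
Hypothesis Hloc : local_with mm.
Implicit Types (A B T K : R -> Prop).

Lemma mm_ideal : is_ideal mm. Proof. by case: Hloc => [[]]. Qed.

Lemma unit_of r : ~ mm r -> exists u, u * r = 1.
Proof.
move=> Hr; set P := fun x : R => exists u, x = u * r.
have HP : is_ideal P.
  split; first by exists 0; rewrite mul0r.
  - by move=> x y [u ->] [v ->]; exists (u + v); rewrite mulrDl.
  - by move=> a x [u ->]; exists (a * u); rewrite mulrA.
case: (classic (P 1)) => [[u Hu]|H1]; first by exists u.
case: Hr; case: Hloc => _ H; apply: (H P) => //; by exists 1; rewrite mul1r.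
Qed.

Lemma exchange A s y : is_ideal A ->
  (forall x r, x \in s -> mm r -> A (r * x)) ->
  addL A s y -> ~ A y ->
  exists s', [/\ size s' = (size s).-1, (0 < size s)%N, (forall x, x \in s' -> x \in s) &
    subsetI (addL A s) (addL A (y :: s'))].
Proof.
move=> HA; elim: s y => [|x s IH] y Hms //=.
move=> [r [z [Hz ->]]] Hy.
have Hms' : forall x' r', x' \in s -> mm r' -> A (r' * x').
  by move=> x' r' Hx' Hr'; apply: Hms => //; rewrite inE Hx' orbT.
case: (classic (mm r)) => Hr.
- have Hy' : addL A s (r * x + z).
    apply: idealD => //; [exact: addL_ideal|apply: addL_base => //; apply: Hms => //; exact: mem_head].
  have HyA : ~ A (r * x + z) by [].
  have [s' [Hsz Hpos Hsub Hinc]] := IH _ Hms' Hy' HyA.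
  exists (x :: s'); split => //=.
  + by rewrite Hsz; case: (size s) Hpos.
  + by move=> w; rewrite !inE => /orP [->|/Hsub ->]; rewrite ?orbT.
  + move=> w [r' [w0 [Hw0 ->]]].
    have [rho [t [Ht ->]]] := Hinc _ Hw0.
    exists rho, (r' * x + t); split; last by ring.
    by exists r', t.
- have [u Hu] := unit_of Hr.
  exists s; split => //.
  + by move=> w Hw; rewrite inE Hw orbT.
  + move=> w [r' [w0 [Hw0 ->]]].
    exists (r' * u), (- (r' * u) * z + w0); split.
    * apply: idealD => //; [exact: addL_ideal|]; apply: idealMl => //; exact: addL_ideal.
    * transitivity (r' * ((u * r) * x) + w0); first by rewrite Hu mul1r.
      by ring.
Qed.

Lemma chain_sub A B c n : ideal_chain A B c n -> forall i, (i <= n)%N -> subsetI (c i) B.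
Proof.
case=> _ HB _ Hs i Hi.
have: forall k, (k <= n)%N -> subsetI (c (n - k)%N) B.
  elim=> [|k IH] Hk; first by rewrite subn0 => x /HB.
  move=> x Hx; apply: (IH (ltnW Hk)).
  have -> : (n - k = (n - k.+1).+1)%N by lia.
  by case: (Hs (n - k.+1)%N ltac:(lia)) => H _; apply: H.
move/(_ (n - i)%N (leq_subr _ _)); by rewrite subKn.
Qed.

Lemma chain_base A B c n : ideal_chain A B c n -> forall i, (i <= n)%N -> subsetI A (c i).
Proof.
case=> H0 _ _ Hs; elim=> [|i IH] Hi x Hx; first by apply/H0.
by case: (Hs i Hi) => H _; apply: H; apply: IH => //; apply: ltnW.
Qed.

Lemma chain_bound n : forall A B c s, is_ideal A -> ideal_chain A B c n ->
  (forall r b, mm r -> B b -> A (r * b)) -> (forall x, x \in s -> B x) ->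
  subsetI B (addL A s) -> (n <= size s)%N.
Proof.
elim: n => [|n IH] A B c s HA Hc HmB Hs HBs //.
have Hc' := Hc; case: Hc' => H0 Hn Hid Hst.
have [_ [y [Hy1 Hy0]]] := Hst 0%N (ltn0Sn _).
have HyA : ~ A y by move=> /H0.
have HyB : B y by apply: (chain_sub Hc (i := 1)).
have Hms : forall x r, x \in s -> mm r -> A (r * x) by move=> x r Hx Hr; apply: HmB => //; apply: Hs.
have [s' [Hsz Hpos Hsub Hinc]] := exchange HA Hms (HBs _ HyB) HyA.
have Hc1 : is_ideal (c 1%N) by apply: Hid.
have HAc1 : subsetI A (c 1%N) by apply: (chain_base Hc).
have := IH (c 1%N) B (fun i => c i.+1) s' Hc1.
have -> : (n.+1 <= size s)%N = (n <= size s')%N by rewrite Hsz; case: (size s) Hpos.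
apply.
- split => //; [by move=> i Hi; apply: Hid|by move=> i Hi; apply: Hst].
- by move=> r b Hr Hb; apply: HAc1; apply: HmB.
- by move=> x /Hsub; apply: Hs.
- move=> b Hb; apply: (addL_min (T := addL (c 1%N) s')) (Hinc _ (HBs _ Hb)).
  + exact: addL_ideal.
  + by move=> x Hx; apply: addL_base => //; apply: HAc1.
  + move=> x; rewrite inE => /orP [/eqP ->|Hx]; first exact: addL_base.
    exact: addL_mem.
Qed.

Lemma chain_ext A B c n D : ideal_chain A B c n -> is_ideal D -> ssubsetI B D ->
  ideal_chain A D (fun i => if (i <= n)%N then c i else D) n.+1.
Proof.
case=> H0 Hn Hid Hs HD [HBD [x [Hx Hx']]]; split => /=.
- by [].
- by rewrite ltnn.
- by move=> i _; case: ifP => // Hi; apply: Hid.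
- move=> i Hi; rewrite ltnS in Hi; rewrite Hi; case: ifP => Hi'; first by apply: Hs.
  have -> : i = n by apply/eqP; rewrite eqn_leq Hi /= leqNgt; apply/negP => H; rewrite H in Hi'.
  split; first by move=> y /Hn /HBD.
  by exists x; split => // /Hn.
Qed.

Lemma chain_eqend A B B' c n : ideal_chain A B c n -> eqI B B' -> ideal_chain A B' c n.
Proof. by case=> H0 Hn Hid Hs HB; split => // x; rewrite Hn HB. Qed.

Lemma greedy A K b : is_ideal A -> is_ideal K -> subsetI A K ->
  (forall c k, ideal_chain A K c k -> (k <= b)%N) ->
  exists s c, [/\ ideal_chain A K c (size s), (size s <= b)%N, (forall x, x \in s -> K x) &
     subsetI K (addL A s)].
Proof.
move=> HA HK HAK Hb.
pose G j := (exists s c, [/\ ideal_chain A K c (size s), (size s <= j)%N, (forall x, x \in s -> K x) &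
     subsetI K (addL A s)]) \/
  (exists s c, [/\ size s = j, ideal_chain A (addL A s) c j, (forall x, x \in s -> K x) &
     ~ subsetI K (addL A s)]).
have Hsub : forall s, (forall x, x \in s -> K x) -> subsetI (addL A s) K.
  by move=> s Hs; apply: addL_min.
have step : forall j s c, size s = j -> ideal_chain A (addL A s) c j -> (forall x, x \in s -> K x) -> G j.
  move=> j s c Hsz Hc Hs.
  case: (classic (subsetI K (addL A s))) => Hcov; last by right; exists s, c.
  left; exists s, c; split => //; last by rewrite Hsz.
  rewrite Hsz; apply: chain_eqend Hc _ => x; split; [exact: Hsub|exact: Hcov].
have HG : forall j, G j.
  elim=> [|j [L|[s [c [Hsz Hc Hs Hncov]]]]].
  - apply: (step 0%N [::] (fun _ => A)) => //; split => //.
  - by left; case: L => s [c [? ? ? ?]]; exists s, c; split => //; apply: leqW.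
  - have [x [Kx Hx]] : exists x, K x /\ ~ addL A s x.
      apply: NNPP => H; apply: Hncov => x Kx; apply: NNPP => Hx; apply: H; by exists x.
    apply: (step j.+1 (x :: s) _ _ (chain_ext Hc _ _)).
    + by rewrite /= Hsz.
    + exact: (addL_ideal (x :: s) HA).
    + split; first by move=> w Hw; exists 0, w; split => //; rewrite mul0r add0r.
      exists x; split => //; exists 1, 0; split; [apply: addL_base => //; exact: ideal0|].
      by rewrite mul1r addr0.
    + by move=> w; rewrite inE => /orP [/eqP ->|/Hs].
case: (HG b) => [//|[s [c [Hsz Hc Hs Hncov]]]].
have [x [Kx Hx]] : exists x, K x /\ ~ addL A s x.
  apply: NNPP => H; apply: Hncov => x Kx; apply: NNPP => Hx; apply: H; by exists x.
have Hssub : ssubsetI (addL A s) K by split; [exact: Hsub|by exists x].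
by have := Hb _ _ (chain_ext Hc HK Hssub); rewrite ltnn.
Qed.

Lemma max_exists (P : nat -> Prop) b : (exists n, P n) -> (forall n, P n -> (n <= b)%N) ->
  exists v, P v /\ forall n, P n -> (n <= v)%N.
Proof.
elim: b => [|b IH] [n Hn] Hb.
- exists n; split => // k Hk; have := Hb _ Hk; have := Hb _ Hn; lia.
- case: (classic (P b.+1)) => Hb1; first by exists b.+1.
  apply: IH; first by exists n.
  move=> k Hk; have := Hb _ Hk; rewrite leq_eqVlt => /orP [/eqP Hk'|//].
  by rewrite Hk' in Hk.
Qed.

Lemma length_exists A K t : is_ideal A -> is_ideal K -> subsetI A K ->
  (forall r b, mm r -> K b -> A (r * b)) -> (forall x, x \in t -> K x) ->
  subsetI K (addL A t) -> exists v, length_eq A K v.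
Proof.
move=> HA HK HAK HmK Ht HKt.
have Hb : forall c k, ideal_chain A K c k -> (k <= size t)%N.
  by move=> c k Hc; apply: (chain_bound HA Hc).
have [s [c [Hc _ _ _]]] := greedy HA HK HAK Hb.
pose P := fun k => exists c, ideal_chain A K c k.
have [v [[c' Hv] Hmax]] : exists v, P v /\ forall k, P k -> (k <= v)%N.
  apply: (max_exists (b := size t)); first by exists (size s), c.
  by move=> k [c0 Hk]; apply: Hb Hk.
exists v; split; first by exists c'.
by move=> c0 k Hk; apply: Hmax; exists c0.
Qed.

Lemma length_upper A K t v : is_ideal A -> length_eq A K v ->
  (forall r b, mm r -> K b -> A (r * b)) -> (forall x, x \in t -> K x) ->
  subsetI K (addL A t) -> (v <= size t)%N.
Proof. by move=> HA [[c Hc] _] H1 H2 H3; apply: (chain_bound HA Hc). Qed.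

Lemma length_span A K v : is_ideal A -> is_ideal K -> subsetI A K -> length_eq A K v ->
  exists s, [/\ (size s <= v)%N, (forall x, x \in s -> K x) & subsetI K (addL A s)].
Proof.
move=> HA HK HAK [_ Hv]; have [s [c [_ ? ? ?]]] := greedy HA HK HAK Hv; by exists s.
Qed.

End Len.


Lemma hockey a j : sumn [seq 'C(a + t, t) | t <- iota 0 j.+1] = 'C(a.+1 + j, j).
Proof.
elim: j => [|j IH]; first by rewrite /= !bin0.
rewrite -[j.+2]addn1 iotaD map_cat sumn_cat IH /= addn0 add0n.
by rewrite [(a.+1 + j.+1)%N]addnS binS -addSnnS addnC.
Qed.

Section Exp.
Variable R : comNzRingType.
Variable J : R -> Prop.
Hypothesis HJ : is_ideal J.

Fixpoint mons (hs : seq R) (j : nat) : seq (R * nat) :=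
  match hs with
  | [::] => [:: (1, 0%N)]
  | x :: hs' => flatten [seq [seq (x ^+ (j - t) * p.1, (p.2 + (j - t))%N) | p <- mons hs' t]
                         | t <- iota 0 j.+1]
  end.

Lemma mons_cons x hs j : mons (x :: hs) j =
  flatten [seq [seq (x ^+ (j - t) * p.1, (p.2 + (j - t))%N) | p <- mons hs t] | t <- iota 0 j.+1].
Proof. by []. Qed.

Lemma size_mons hs j : size (mons hs j) = 'C(size hs + j, j).
Proof.
elim: hs j => [|x hs IH] j; first by rewrite /= add0n binn.
rewrite (_ : mons (x :: hs) j = flatten [seq [seq (x ^+ (j - t) * p.1, (p.2 + (j - t))%N) | p <- mons hs t]
                         | t <- iota 0 j.+1]) // size_flatten /shape -map_comp.
rewrite (eq_map (g := fun t => 'C(size hs + t, t))); first by rewrite hockey.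
by move=> t /=; rewrite size_map IH.
Qed.

Lemma mons_prop hs j u k : (u, k) \in mons hs j ->
  (k <= j)%N /\ powI (addL J hs) k u.
Proof.
elim: hs j u k => [|x hs IH] j u k.
- by rewrite inE => /eqP [-> ->].
- rewrite mons_cons => /flattenP [l /mapP [t Ht ->] /mapP [[u0 k0] Hp [-> ->]]] /=.
  rewrite mem_iota add0n ltnS in Ht.
  have [Hk Hu] := IH _ _ _ Hp; split; first lia.
  rewrite addnC; apply: powI_mul.
  + apply: powI_exp; first exact: (addL_ideal (x :: hs) HJ).
    by exists 1, 0; split; [apply: addL_base => //; exact: ideal0|rewrite mul1r addr0].
  + apply: powI_mono Hu => y Hy; exists 0, y; split => //; by rewrite mul0r add0r.
Qed.

Lemma bin_exp (A : R -> Prop) (x : R) j (T : R -> Prop) : is_ideal A -> is_ideal T ->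
  (forall i a, (i <= j)%N -> powI A (j - i) a -> T (x ^+ i * a)) ->
  subsetI (powI (addL A [:: x]) j) T.
Proof.
move=> HA; elim: j T => [|j IH] T HT H y Hy /=.
- by have := H 0%N y (leqnn _) I; rewrite expr0 mul1r.
- have HAx : is_ideal (addL A [:: x]) by exact: addL_ideal.
  move: y Hy; apply: mulI_min => // b z Hb Hz.
  suff: colonI T (powI (addL A [:: x]) j) b by move/(_ z Hz).
  move: Hb => [r [a0 [Ha0 ->]]] w Hw.
  move: w Hw; apply: (IH (fun w => T ((r * x + a0) * w))); first exact: pre_ideal.
  move=> i a Hi Ha.
  have -> : (r * x + a0) * (x ^+ i * a) = r * (x ^+ i.+1 * a) + x ^+ i * (a0 * a)
    by rewrite exprS; ring.
  apply: idealD => //.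
  - apply: idealMl => //; exact: (H i.+1 a Hi Ha).
  - apply: (H i (a0 * a) (leqW Hi)).
    by rewrite subSn //=; apply: mulI_prod.
Qed.

Lemma expand (hs : seq R) j (T : R -> Prop) : is_ideal T ->
  (forall u k, (u, k) \in mons hs j -> forall z, powI J (j - k) z -> T (u * z)) ->
  subsetI (powI (addL J hs) j) T.
Proof.
elim: hs j T => [|x hs IH] j T HT H.
- by move=> z Hz; have := H 1 0%N (mem_head _ _) z; rewrite subn0 mul1r; apply.
- change (subsetI (powI (addL (addL J hs) [:: x]) j) T).
  apply: bin_exp => //; first exact: addL_ideal.
  move=> i a Hi Ha.
  pose t := (j - i)%N.
  have Hti : i = (j - t)%N by rewrite /t; lia.
  suff: powI (addL J hs) t a -> T (x ^+ (j - t) * a) by rewrite -Hti; apply.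
  move=> {Ha} Ha; move: a Ha; apply: (IH t (fun a => T (x ^+ (j - t) * a))); first exact: pre_ideal.
  move=> u k Huk z Hz; rewrite mulrA.
  have [Hk _] := mons_prop Huk.
  have := H (x ^+ (j - t) * u) (k + (j - t))%N; apply.
  + apply/flattenP; exists [seq (x ^+ (j - t) * p.1, (p.2 + (j - t))%N) | p <- mons hs t].
    * apply/mapP; exists t => //; rewrite mem_iota /t; lia.
    * by apply/mapP; exists (u, k).
  + have -> : (j - (k + (j - t)) = t - k)%N by rewrite /t; lia.
    exact: Hz.
Qed.

End Exp.


Section Main.
Variable R : comNzRingType.
Variable mm : R -> Prop.
Hypothesis Hloc : local_with mm.
Variables (J I : R -> Prop) (hs : seq R) (s : nat).
Hypothesis HJ : is_ideal J.
Hypothesis HI : is_ideal I.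
Hypothesis HJI : subsetI J I.
Hypothesis HIh : subsetI I (addL J hs).
Hypothesis HhI : subsetI (addL J hs) I.
Hypothesis Hred : subsetI (powI I s.+1) (mulI J (powI I s)).

Lemma red_pow k : subsetI (powI I (s + k)) (mulI (powI J k) (powI I s)).
Proof.
elim: k => [|k IH].
  by rewrite addn0 => y Hy; rewrite -[y]mul1r; apply: mulI_prod.
rewrite addnS; change (subsetI (mulI I (powI I (s + k))) (mulI (powI J k.+1) (powI I s))).
apply: mulI_min; first exact: mulI_ideal.
move=> i z Hi /IH Hz; rewrite mulrC.
suff: colonI (mulI (powI J k.+1) (powI I s)) (fun i => I i) z by apply.
move: z Hz; apply: mulI_min; first by apply: colon_ideal; exact: mulI_ideal.
move=> a b Ha Hb i' Hi'.
have Hw : mulI J (powI I s) (i' * b) by apply: Hred; apply: mulI_prod.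
have -> : a * b * i' = a * (i' * b) by ring.
move: (i' * b) Hw; apply: (mulI_min (T := fun w => mulI (powI J k.+1) (powI I s) (a * w))).
  exact: pre_ideal (mulI_ideal _ _).
move=> j w Hj Hw; rewrite mulrA [a * j]mulrC; apply: mulI_prod => //; exact: mulI_prod.
Qed.

Lemma decomp n T : (s <= n)%N -> is_ideal T ->
  (forall u k, (u, k) \in mons hs s -> forall z, powI J (n - k) z -> T (u * z)) ->
  subsetI (powI I n) T.
Proof.
move=> Hsn HT H y Hy.
have : powI I (s + (n - s)) y by rewrite subnKC.
move/red_pow; clear Hy; move: y; apply: mulI_min => // a b Ha Hb.
have Hb' : powI (addL J hs) s b by apply: powI_mono Hb.
clear Hb; move: b Hb'; apply: (expand HJ (T := fun b => T (a * b))) => //; first exact: pre_ideal.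
move=> u k Huk z Hz; rewrite mulrCA; apply: (H u k Huk).
have [Hk _] := mons_prop HJ Huk.
have -> : (n - k = (n - s) + (s - k))%N by lia.
exact: powI_mul.
Qed.

Lemma count_bound n (F : nat -> rat) : (s <= n)%N ->
  (forall k, (k <= s)%N -> exists v, length_eq (mulI mm (powI J (n - k))) (powI J (n - k)) v /\
      (v%:R : rat) = F k) ->
  exists vI, length_eq (mulI mm (powI I n)) (powI I n) vI /\
    (vI%:R : rat) <= \sum_(p <- mons hs s) F p.2.
Proof.
move=> Hsn HF.
set L := mons hs s.
set A := mulI mm (powI I n).
have HA : is_ideal A by exact: mulI_ideal.
have HIn : is_ideal (powI I n) by exact: powI_ideal.
have key : forall L', (forall p, p \in L' -> p \in L) ->
  exists G, [/\ (size G)%:R <= \sum_(p <- L') F p.2, (forall x, x \in G -> powI I n x) &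
    forall p, p \in L' -> forall z, powI J (n - p.2) z -> addL A G (p.1 * z)].
  elim=> [|[u k] L' IH] HL.
    by exists [::]; split => //; rewrite big_nil.
  have [G0 [Hsz0 HG0 Hcov0]] : exists G, [/\ (size G)%:R <= \sum_(p <- L') F p.2,
      (forall x, x \in G -> powI I n x) &
      forall p, p \in L' -> forall z, powI J (n - p.2) z -> addL A G (p.1 * z)].
    by apply: IH => p Hp; apply: HL; rewrite inE Hp orbT.
  have [Hk Hu] := mons_prop HJ (HL _ (mem_head _ _)).
  have Hu' : powI I k u by exact: (powI_mono HhI Hu).
  have [v [Hv Hvf]] := HF k Hk.
  have HJk : is_ideal (powI J (n - k)) by exact: powI_ideal.
  have [g [Hgs Hg Hgcov]] := length_span (mulI_ideal _ _) HJk (@mulI_sub _ mm _ HJk) Hv.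
  have HuI : forall x, powI J (n - k) x -> powI I n (u * x).
    move=> x Hx; have -> : n = (k + (n - k))%N by lia.
    by apply: powI_mul => //; exact: (powI_mono HJI Hx).
  exists ([seq u * x | x <- g] ++ G0); split.
  - rewrite big_cons size_cat natrD /= -Hvf; apply: lerD => //.
    by rewrite ler_nat size_map.
  - move=> x; rewrite mem_cat => /orP [/mapP [y Hy ->]|Hx]; [exact: HuI (Hg _ Hy)|exact: HG0].
  - have Hmono : subsetI (addL A G0) (addL A ([seq u * x | x <- g] ++ G0)).
      apply: addL_min; [exact: addL_ideal|by move=> x; apply: addL_base|].
      by move=> x Hx; apply: addL_mem => //; rewrite mem_cat Hx orbT.
    move=> [u' k']; rewrite inE => /orP [/eqP [-> ->]|Hp] z Hz /=; last first.
      by apply: Hmono; apply: (Hcov0 (u', k')).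
    move: (Hgcov _ Hz); clear Hz; move: z; apply: (addL_min (T := fun z => addL A ([seq u * x | x <- g] ++ G0) (u * z))).
    + exact: pre_ideal (addL_ideal _ HA).
    + apply: mulI_min; first exact: pre_ideal (addL_ideal _ HA).
      move=> r y Hr Hy; rewrite mulrCA; apply: addL_base => //; apply: mulI_prod => //.
      exact: HuI.
    + move=> x Hx; apply: addL_mem => //; rewrite mem_cat; apply/orP; left.
      by apply/mapP; exists x.
have [G [HszG HG HcovG]] := key L (fun p Hp => Hp).
have HInG : subsetI (powI I n) (addL A G).
  by apply: decomp => //; [exact: addL_ideal|move=> u k Huk z Hz; apply: (HcovG (u, k))].
have HmA : forall r b, mm r -> powI I n b -> A (r * b) by move=> r b Hr Hb; apply: mulI_prod.
have [vI HvI] := length_exists Hloc HA HIn (@mulI_sub _ mm _ HIn) HmA HG HInG.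
exists vI; split => //; apply: le_trans HszG; rewrite ler_nat.
exact: (length_upper Hloc HA HvI HmA HG HInG).
Qed.

End Main.


Lemma fact_growth n e : (n ^ e <= e`! * 'C(n + e, e))%N.
Proof.
rewrite mulnC bin_ffact ffact_prod.
have -> : (n ^ e = \prod_(i < e) n)%N by rewrite big_const_ord; elim: e => //= e IH; rewrite expnS IH.
apply: (big_ind2 (fun a b => a <= b)%N) => //; first by move=> *; exact: leq_mul.
move=> i _; have := ltn_ord i; lia.
Qed.

Lemma pbound (p : {poly rat}) e x : (size p <= e)%N -> (1 <= x)%N ->
  `|p.[x%:R]| <= (\sum_(i < size p) `|p`_i|) * x%:R ^+ e.-1.
Proof.
move=> Hs Hx; rewrite horner_coef big_distrl /=; apply: le_trans (ler_norm_sum _ _ _) _.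
apply: ler_sum => i _; rewrite normrM normrX normr_nat.
apply: ler_wpM2l => //; apply: ler_weXn2l; first by rewrite ler1n.
rewrite /=; have Hie := leq_trans (ltn_ord i) Hs; by case: (e) Hie.
Qed.

Lemma sum_const_seq (T : Type) (L : seq T) (c : rat) : \sum_(k <- L) c = (size L)%:R * c.
Proof. elim: L => [|a L IH]; first by rewrite big_nil mul0r. by rewrite big_cons IH /= -addn1 natrD; ring. Qed.

Lemma growth (e : nat) (pI pJ : {poly rat}) (f0I f0J N : nat) (L : seq nat) :
  (size pI <= e)%N -> (size pJ <= e)%N -> (forall k, k \in L -> (k < N)%N) ->
  (forall n, (N <= n)%N ->
    (f0I * 'C(n + e, e))%:R + pI.[n%:R] <=
      \sum_(k <- L) (((f0J * 'C(n - k + e, e))%:R : rat) + pJ.[(n - k)%:R])) ->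
  (f0I <= size L * f0J)%N.
Proof.
move=> HpI HpJ HL H.
set BI := \sum_(i < size pI) `|pI`_i|.
set BJ := \sum_(i < size pJ) `|pJ`_i|.
have BI0 : 0 <= BI by apply: sumr_ge0 => i _.
have BJ0 : 0 <= BJ by apply: sumr_ge0 => i _.
set B := BI + (size L)%:R * BJ.
have key : forall n, (N.+1 <= n)%N ->
    ((f0I * 'C(n + e, e))%:R : rat) <= (size L * f0J * 'C(n + e, e))%:R + B * n%:R ^+ e.-1.
  move=> n Hn.
  have H1 := H n (ltnW Hn).
  have H2 : `|pI.[n%:R]| <= BI * n%:R ^+ e.-1 by apply: pbound => //; lia.
  have H3 : \sum_(k <- L) (((f0J * 'C(n - k + e, e))%:R : rat) + pJ.[(n - k)%:R]) <=
      \sum_(k <- L) (((f0J * 'C(n + e, e))%:R : rat) + BJ * n%:R ^+ e.-1).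
    rewrite [X in X <= _]big_seq [X in _ <= X]big_seq; apply: ler_sum => k Hk; have Hkn := HL k Hk.
    apply: lerD.
      rewrite ler_nat; apply: leq_mul => //; apply: leq_bin2l; lia.
    apply: le_trans (ler_norm _) _; apply: le_trans (pbound (x := (n - k)%N) HpJ _) _; first lia.
    apply: ler_wpM2l => //; apply: lerXn2r; rewrite ?nnegrE ?ler0n //= ler_nat; lia.
  rewrite sum_const_seq in H3.
  have H4 := ler_normr (pI.[n%:R]); rewrite ler_norml in H2; case/andP: H2 => H2 _.
  rewrite /B !natrM; rewrite !natrM in H1 H3; nra.
rewrite leqNgt; apply/negP => Hlt.
clear H; case: e HpI HpJ key => [|e] HpI HpJ key.
- have BI00 : BI = 0 by rewrite /BI; move: HpI; rewrite leqn0 => /eqP ->; rewrite big_ord0.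
  have BJ00 : BJ = 0 by rewrite /BJ; move: HpJ; rewrite leqn0 => /eqP ->; rewrite big_ord0.
  have := key N.+1 (leqnn _); rewrite /B BI00 BJ00 !bin0 !muln1 mulr0 addr0 ler_nat.
  by rewrite leqNgt Hlt.
- set b := Num.Def.archi_bound (e.+1`!%:R * B).
  have Hb := @archi_boundP _ (e.+1`!%:R * B) (mulr_ge0 (ler0n _ _) (addr_ge0 BI0 (mulr_ge0 (ler0n _ _) BJ0))).
  set n := (N.+1 + b)%N.
  have Hn := key n (leq_addr _ _).
  have Hg : (n%:R ^+ e.+1 : rat) <= (e.+1`! * 'C(n + e.+1, e.+1))%:R by rewrite -natrX ler_nat fact_growth.
  have HC : ('C(n + e.+1, e.+1)%:R : rat) <= B * n%:R ^+ e.
    have Hlt' : (size L * f0J * 'C(n + e.+1, e.+1) + 'C(n + e.+1, e.+1) <= f0I * 'C(n + e.+1, e.+1))%N.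
      have := leq_mul Hlt (leqnn 'C(n + e.+1, e.+1)); by rewrite mulSn addnC.
    move: Hlt'; rewrite -(ler_nat rat) natrD => Hlt'; simpl in Hn; lra.
  have Hpos : (0 : rat) < n%:R ^+ e by apply: exprn_gt0; rewrite ltr0n /n; lia.
  have : (n%:R : rat) * n%:R ^+ e <= (e.+1`!%:R * B) * n%:R ^+ e.
    rewrite -exprS; apply: le_trans Hg _; rewrite natrM -mulrA; apply: ler_wpM2l => //.
  rewrite ler_pM2r // => Hn2.
  have : (b%:R : rat) <= n%:R by rewrite ler_nat /n leq_addl.
  lra.
Qed.

Local Close Scope ring_scope.
Unset Implicit Arguments.
Theorem proposition2p7 (R : comNzRingType) (mm J : R -> Prop) (d : nat)
    (m : nat) (h : 'I_m -> R) (s l f0I f0J : nat) :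
  noetherian R -> local_with mm -> krull_dim R d -> (1 <= d)%N ->
  m_primary mm J ->
  (forall i, integral_over J (h i)) ->
  let I := gen (fun x => J x \/ exists i, x = h i) in
  is_red_number J I s ->
  length_eq (colonI J I) (@unitI R) l ->
  is_f0 mm I d f0I -> is_f0 mm J d f0J ->
  (f0I <= (1 + l * ('C(m + s, s) - 1)) * f0J)%N.
Proof.
move=> HN Hloc _ Hd [[[HJ _] _] _] _ I [Hred Hredmin] Hl [pI [NI [HpI HfI]]] [pJ [NJ [HpJ HfJ]]].
set hs := [seq h i | i <- enum 'I_m].
have HI : is_ideal I by exact: gen_ideal.
have HJI : subsetI J I by move=> x Hx; apply: gen_sub; left.
have Hhs : forall x, x \in hs -> I x.
  by move=> x /mapP [i _ ->]; apply: gen_sub; right; exists i.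
have HIh : subsetI I (addL J hs).
  apply: gen_min; first exact: addL_ideal.
  move=> x [Hx|[i ->]]; first exact: addL_base.
  by apply: addL_mem => //; apply/mapP; exists i; rewrite ?mem_enum.
have HhI : subsetI (addL J hs) I by apply: addL_min.
have Hred' : subsetI (powI I s.+1) (mulI J (powI I s)) by move=> x /Hred.
have Hmain : (f0I <= 'C(m + s, s) * f0J)%N.
  have -> : 'C(m + s, s) = size [seq p.2 | p <- mons hs s] by rewrite size_map size_mons size_map size_enum_ord.
  apply: (growth (N := (s + NI + NJ).+1) HpI HpJ).
    move=> k /mapP [[u k'] Hp ->] /=; have [Hk _] := mons_prop HJ Hp; lia.
  move=> n Hn.
  set F := fun k => ((f0J * 'C(n - k + d.-1, d.-1))%:R + pJ.[(n - k)%:R] : rat).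
  have HF : forall k, (k <= s)%N -> exists v, length_eq (mulI mm (powI J (n - k))) (powI J (n - k)) v /\
      (v%:R : rat) = F k.
    move=> k Hk.
    have HJk : is_ideal (powI J (n - k)) by exact: powI_ideal.
    have [t Ht] := HN _ HJk.
    have HA : is_ideal (mulI mm (powI J (n - k))) by exact: mulI_ideal.
    have [v Hv] : exists v, length_eq (mulI mm (powI J (n - k))) (powI J (n - k)) v.
      apply: (length_exists Hloc HA HJk (@mulI_sub _ mm _ HJk) (t := t)).
      + by move=> r b Hr Hb; apply: mulI_prod.
      + by move=> x Hx; apply/Ht; apply: gen_sub.
      + move=> x /Ht; apply: gen_min; first exact: addL_ideal.
        by move=> y Hy; apply: addL_mem.
    exists v; split => //; apply: HfJ => //; lia.
  have [vI [HvI Hle]] := count_bound Hloc HJ HJI HIh HhI Hred' (F := F) (ltac:(lia) : (s <= n)%N) HF.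
  rewrite -(HfI n vI) //; last by lia.
  by rewrite big_map.
have [c [H0 Hc _ _]] := (proj1 Hl).
case: l Hl H0 Hc => [|l] Hl H0 Hc.
- have Hs0 : s = 0%N.
    case: s Hred Hredmin Hmain Hred' => [//|s] _ Hmin _ _; exfalso; apply: (Hmin 0%N) => // x; split.
    + move=> Hx; have HxI : I x.
        move: x Hx; apply: (mulI_min (T := I)) => // a b Ha _. exact: (idealMr b HI Ha).
      have := proj1 (H0 1%R) (proj2 (Hc 1%R) Logic.I) x HxI; rewrite mul1r => HxJ.
      by rewrite -[x]mulr1; apply: mulI_prod.
    + move=> Hx; have HxJ : J x.
        by move: x Hx; apply: (mulI_min (T := J)) => // a b Ha _; exact: (idealMr b HJ Ha).
      by rewrite -[x]mulr1; apply: mulI_prod => //; apply: HJI.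
  by move: Hmain; rewrite Hs0 addn0 bin0 muln0 addn0.
- apply: leq_trans Hmain _; apply: leq_mul => //.
  have := bin_gt0 (m + s) s; rewrite leq_addl => Hpos.
  set C := 'C(m + s, s) in Hpos *.
  have : (C - 1 <= l.+1 * (C - 1))%N by apply: leq_pmull.
  lia.
Qed.
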